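(* Let $\boldsymbol\pi$ be a prime of $H_{1,2,2}$ and $p$ a rational prime. Then $\boldsymbol\pi$ divides $p$ in $H_{1,2,2}$ (i.e. $p=\boldsymbol\pi\mathbf{a}$ or $p=\mathbf{a}\boldsymbol\pi$ for some $\mathbf{a}\in H_{1,2,2}$) if and only if $N(\boldsymbol\pi)=p$; moreover, if $N(\boldsymbol\pi)=p$ then $\boldsymbol\pi$ divides $p$ both on the left and on the right.
   Context: Let $\mathbf{i},\mathbf{j},\mathbf{k}$ be the standard quaternion units; $\overline{\mathbf{q}}$ is quaternion conjugation and $N(\mathbf{q})=\mathbf{q}\overline{\mathbf{q}}$. $H_{1,2,2}$ is the subring of the quaternions equal to the $\mathbb{Z}$-module generated by $\mathbf{v}_1=1$, $\mathbf{v}_2=\mathbf{i}$, $\mathbf{v}_3=\tfrac12(1+\mathbf{i}+\sqrt2\,\mathbf{j})$, $\mathbf{v}_4=\tfrac12(1+\mathbf{i}+\sqrt2\,\mathbf{k})$. A unit is an element invertible in $H_{1,2,2}$. A prime of $H_{1,2,2}$ is a nonzero nonunit $\boldsymbol\pi$ such that whenever $\boldsymbol\pi=\mathbf{a}\mathbf{b}$ in $H_{1,2,2}$, one of $\mathbf{a},\mathbf{b}$ is a unit. *)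

(* Defs.v *)
From HB Require Import structures.
From mathcomp Require Import all_boot all_order all_algebra.
From mathcomp Require Import reals.
Set Implicit Arguments. Unset Strict Implicit. Unset Printing Implicit Defensive.
Import Order.TTheory GRing.Theory Num.Theory.
Local Open Scope ring_scope.

Record quat (R : realType) := Quat { q0 : R; q1 : R; q2 : R; q3 : R }.

Section Quat.
Variable R : realType.

Definition qadd (p q : quat R) : quat R :=
  Quat (q0 p + q0 q) (q1 p + q1 q) (q2 p + q2 q) (q3 p + q3 q).

Definition qscale (r : R) (q : quat R) : quat R :=
  Quat (r * q0 q) (r * q1 q) (r * q2 q) (r * q3 q).

Definition qmul (p q : quat R) : quat R :=
  Quat (q0 p * q0 q - q1 p * q1 q - q2 p * q2 q - q3 p * q3 q)
       (q0 p * q1 q + q1 p * q0 q + q2 p * q3 q - q3 p * q2 q)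
       (q0 p * q2 q - q1 p * q3 q + q2 p * q0 q + q3 p * q1 q)
       (q0 p * q3 q + q1 p * q2 q - q2 p * q1 q + q3 p * q0 q).

Definition qconj (q : quat R) : quat R :=
  Quat (q0 q) (- q1 q) (- q2 q) (- q3 q).

Definition qofR (r : R) : quat R := Quat r 0 0 0.

Definition qzero : quat R := qofR 0.
Definition qone : quat R := qofR 1.

Definition qnorm (q : quat R) : quat R := qmul q (qconj q).

(* generators of H_{1,2,2} *)
Definition v1 : quat R := Quat 1 0 0 0.
Definition v2 : quat R := Quat 0 1 0 0.
Definition v3 : quat R := Quat (1/2) (1/2) (Num.sqrt 2 / 2) 0.
Definition v4 : quat R := Quat (1/2) (1/2) 0 (Num.sqrt 2 / 2).

Definition inH (q : quat R) : Prop :=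
  exists a b c d : int,
    q = qadd (qadd (qscale a%:~R v1) (qscale b%:~R v2))
             (qadd (qscale c%:~R v3) (qscale d%:~R v4)).

Definition Hunit (u : quat R) : Prop :=
  inH u /\ exists v, inH v /\ qmul u v = qone /\ qmul v u = qone.

Definition Hprime (pi : quat R) : Prop :=
  inH pi /\ pi <> qzero /\ ~ Hunit pi /\
  forall a b, inH a -> inH b -> pi = qmul a b -> Hunit a \/ Hunit b.

Definition Hldiv (pi x : quat R) : Prop := exists a, inH a /\ x = qmul pi a.
Definition Hrdiv (pi x : quat R) : Prop := exists a, inH a /\ x = qmul a pi.

End Quat.

(* Main.v *)
Require Import Defs.
From HB Require Import structures.
From mathcomp Require Import all_boot all_order all_algebra.
From mathcomp Require Import reals.
Import Order.TTheory GRing.Theory Num.Theory.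
Local Open Scope ring_scope.
From mathcomp Require Import zify ring lra.
Lemma step1 (p : nat) : prime p -> (2 < p)%N ->
  exists a b : nat, [/\ (a <= p./2)%N, (b <= p./2)%N & (p %| a*a + b*b + 1)%N].
Proof.
move=> pp p2.
set h := p./2.
have hp : p = (h + h).+1.
  have [p2e|po] := even_prime pp; first by rewrite p2e in p2.
  have := odd_double_half p; rewrite po -addnn /h; lia.
pose F (x : 'I_h.+1 + 'I_h.+1) : 'F_p :=
  match x with inl a => (a%:R)^+2 | inr b => -1 - (b%:R)^+2 end.
have : ~~ injectiveb F.
  apply/negP=> /injectiveP inj; have := leq_card F inj.
  rewrite card_sum !card_ord Fp_cast //; lia.
case/injectivePn=> x [y] nxy eF.
have sq_inj (a b : 'I_h.+1) : ((a%:R : 'F_p)^+2 = (b%:R)^+2) -> a = b.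
  move/eqP; rewrite eqf_sqr => /orP[].
    have := ltn_ord a; have := ltn_ord b => ha hb.
    move/eqP/(congr1 val); rewrite /= !val_Fp_nat // !modn_small; try lia.
    by move/val_inj.
  move/eqP => e.
  have : ((a + b)%N%:R : 'F_p) = 0 by rewrite natrD e; ring.
  move/(congr1 val); rewrite /= val_Fp_nat //.
  have := ltn_ord a; have := ltn_ord b => ha hb.
  rewrite modn_small /=; last lia. move=> e'; apply/val_inj=>/=; lia.
case: x y nxy eF => [a|a] [b|b] nxy /= eF.
- by rewrite (sq_inj _ _ eF) eqxx in nxy.
- have : ((a*a + b*b + 1)%N%:R : 'F_p) = 0.
    by rewrite !natrD !natrM -!expr2 eF; ring.
  move/(congr1 val); rewrite /= val_Fp_nat // => e.
  have := ltn_ord a; have := ltn_ord b => ha hb.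
  exists a, b; split; lia.
- have : ((b*b + a*a + 1)%N%:R : 'F_p) = 0.
    by rewrite !natrD !natrM -!expr2 -eF; ring.
  move/(congr1 val); rewrite /= val_Fp_nat // => e.
  have := ltn_ord a; have := ltn_ord b => ha hb.
  exists b, a; split; lia.
- have : (a%:R : 'F_p)^+2 = (b%:R)^+2.
    by move/addrI/oppr_inj: eF.
  by move/sq_inj=> e; rewrite e eqxx in nxy.
Qed.

Definition S4 (x1 x2 x3 x4 : int) := x1 * x1 + x2 * x2 + x3 * x3 + x4 * x4.

Lemma coordsq (m q y x s : int) : x = m * q + y -> 2 * y = m * s ->
  x * x = m * m * (q * q + q * s) + y * y.
Proof.
move=> -> e.
have -> : (m * q + y) * (m * q + y) = m * m * q * q + m * q * (2 * y) + y * y by ring.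
rewrite e; ring.
Qed.

Lemma red (m : int) (x : int) : 0 < m ->
  exists q y, [/\ x = m * q + y, 2 * y <= m & - m <= 2 * y].
Proof.
move=> m0.
set h := (m %/ 2)%Z.
have h1 := divz_eq m 2. have h2 := modz_ge0 m (isT : (2:int) != 0).
have h3 := ltz_pmod m (isT : (0:int) < 2).
have := divz_eq (x + h) m. have := modz_ge0 (x + h) (lt0r_neq0 m0).
have := ltz_pmod (x + h) m0.
set q := ((x + h) %/ m)%Z; set r := ((x + h) %% m)%Z => r1 r2 r3.
exists q, (r - h); split; lia.
Qed.

Lemma descent (p : nat) : prime p -> forall m : nat, (0 < m < p)%N ->
  (exists x1 x2 x3 x4, S4 x1 x2 x3 x4 = Posz (m * p)%N) ->
  exists x1 x2 x3 x4, S4 x1 x2 x3 x4 = p%:Z.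
Proof.
move=> pp; elim/ltn_ind => m IH /andP[m0 mp] [x1 [x2 [x3 [x4 hx]]]].
have [em|m1] := eqVneq m 1%N; first by subst m; exists x1, x2, x3, x4; rewrite hx mul1n.
have m1' : (1 < m)%N by lia.
have mz : (0 : int) < m%:Z by rewrite ltz_nat.
have [q1 [y1 [e1 a1 b1]]] := red _ x1 mz.
have [q2 [y2 [e2 a2 b2]]] := red _ x2 mz.
have [q3 [y3 [e3 a3 b3]]] := red _ x3 mz.
have [q4 [y4 [e4 a4 b4]]] := red _ x4 mz.
set M := m%:Z. set P := p%:Z.
have hx' : S4 x1 x2 x3 x4 = M * P by rewrite hx PoszM.
pose r := P - 2 * (x1 * q1 + x2 * q2 + x3 * q3 + x4 * q4) + M * (q1 * q1 + q2 * q2 + q3 * q3 + q4 * q4).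
subst x1 x2 x3 x4.
have hy : S4 y1 y2 y3 y4 = M * r.
  by rewrite /r mulrDr mulrBr -hx' /S4; ring.
have r0 : 0 <= r by move: hy; rewrite /S4; nia.
have rM : r <= M.
  have : 4 * (M * r) <= 4 * (M * M) by rewrite -hy /S4; nia.
  nia.
have notdv : forall K, P = M * K -> False.
  move=> K eK.
  have dv : (m %| p)%N.
    have : (M %| P)%Z by apply/dvdzP; exists K; rewrite eK mulrC.
    by [].
  case/primeP: pp => _ /(_ m dv) /orP[] /eqP; lia.
have bad : (forall s1 s2 s3 s4, 2 * y1 = M * s1 -> 2 * y2 = M * s2 -> 2 * y3 = M * s3 ->
   2 * y4 = M * s4 -> (r = 0 \/ r = M) -> False).
  move=> s1 s2 s3 s4 f1 f2 f3 f4 hr.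
  have c1 := @coordsq M q1 y1 _ s1 (erefl _) f1.
  have c2 := @coordsq M q2 y2 _ s2 (erefl _) f2.
  have c3 := @coordsq M q3 y3 _ s3 (erefl _) f3.
  have c4 := @coordsq M q4 y4 _ s4 (erefl _) f4.
  set K := (q1 * q1 + q1 * s1) + (q2 * q2 + q2 * s2) + (q3 * q3 + q3 * s3) + (q4 * q4 + q4 * s4).
  have : M * P = M * (M * K + r).
    rewrite -hx' mulrDr -hy /S4 c1 c2 c3 c4 /K; ring.
  move/(mulfI (lt0r_neq0 mz)) => eP.
  case: hr => er; rewrite er in eP.
    by apply: (notdv K); rewrite eP addr0.
  by apply: (notdv (K + 1)); rewrite eP; ring.
have sgn : forall y, (2 * y) * (2 * y) = M * M -> exists s, 2 * y = M * s.
  move=> y ey.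
  have : (2 * y - M) * (2 * y + M) = 0 by rewrite mulrDr !mulrBl ey; ring.
  move/eqP; rewrite mulf_eq0 => /orP[] /eqP e.
    by exists 1; rewrite mulr1; move/eqP: e; rewrite subr_eq0 => /eqP.
  by exists (-1); rewrite mulrN1; move/eqP: e; rewrite addr_eq0 => /eqP.
have [er|rn0] := eqVneq r 0.
  have z1 : y1 = 0 by move: hy; rewrite er /S4; nia.
  have z2 : y2 = 0 by move: hy; rewrite er /S4; nia.
  have z3 : y3 = 0 by move: hy; rewrite er /S4; nia.
  have z4 : y4 = 0 by move: hy; rewrite er /S4; nia.
  by exfalso; apply: (bad 0 0 0 0); rewrite ?z1 ?z2 ?z3 ?z4 ?mulr0; auto.
have [er|rnM] := eqVneq r M.
  have : 4 * (M * M) = (2*y1)*(2*y1) + (2*y2)*(2*y2) + (2*y3)*(2*y3) + (2*y4)*(2*y4).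
    by rewrite -{2}er -hy /S4; ring.
  move=> e4.
  have t1 : (2*y1)*(2*y1) <= M * M by nia.
  have t2 : (2*y2)*(2*y2) <= M * M by nia.
  have t3 : (2*y3)*(2*y3) <= M * M by nia.
  have t4 : (2*y4)*(2*y4) <= M * M by nia.
  have [s1 f1] : exists s, 2 * y1 = M * s by apply: sgn; clear -e4 t1 t2 t3 t4; lia.
  have [s2 f2] : exists s, 2 * y2 = M * s by apply: sgn; clear -e4 t1 t2 t3 t4; lia.
  have [s3 f3] : exists s, 2 * y3 = M * s by apply: sgn; clear -e4 t1 t2 t3 t4; lia.
  have [s4 f4] : exists s, 2 * y4 = M * s by apply: sgn; clear -e4 t1 t2 t3 t4; lia.
  by exfalso; apply: (bad s1 s2 s3 s4); auto.
have [r' er'] : exists r' : nat, r = r'%:Z by exists `|r|%N; rewrite gez0_abs.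
have r'm : (r' < m)%N by rewrite -ltz_nat -er' lt_neqAle rnM rM.
have r'0 : (0 < r')%N by rewrite -ltz_nat -er' lt_neqAle eq_sym rn0 r0.
apply: (IH r' r'm); first by apply/andP; split => //; lia.
set w1 := q1 * y1 + q2 * y2 + q3 * y3 + q4 * y4 + r.
set w2 := q1 * y2 - q2 * y1 + q3 * y4 - q4 * y3.
set w3 := q1 * y3 - q3 * y1 + q4 * y2 - q2 * y4.
set w4 := q1 * y4 - q4 * y1 + q2 * y3 - q3 * y2.
exists w1, w2, w3, w4.
have ez1 : M * w1 = M * (q1 * y1 + q2 * y2 + q3 * y3 + q4 * y4) + S4 y1 y2 y3 y4.
  by rewrite /w1 mulrDr hy.
have key : M * M * (r * P) = M * M * S4 w1 w2 w3 w4.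
  have -> : M * M * (r * P) = (M * P) * (M * r) by ring.
  rewrite -hx' -hy.
  have -> : M * M * S4 w1 w2 w3 w4 = (M * w1) * (M * w1) + (M * w2) * (M * w2)
     + (M * w3) * (M * w3) + (M * w4) * (M * w4) by rewrite /S4; ring.
  rewrite ez1 /w2 /w3 /w4 /S4; ring.
move/(mulfI _): key => <-.
  by rewrite PoszM er'.
by rewrite mulf_neq0 // lt0r_neq0.
Qed.

Lemma four_sq (p : nat) : prime p -> exists x1 x2 x3 x4, S4 x1 x2 x3 x4 = p%:Z.
Proof.
move=> pp.
have [p2|podd] := even_prime pp.
  by exists 1, 1, 0, 0; rewrite p2.
have p2 : (2 < p)%N by apply: odd_prime_gt2 podd pp.
have [a [b [ha hb dv]]] := step1 p pp p2.
have hp : p = (p./2 + p./2).+1.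
  by have := odd_double_half p; rewrite podd -addnn; lia.
set n := (a * a + b * b + 1)%N.
have en : ((n %/ p) * p)%N = n by rewrite divnK.
apply: (descent p pp (n %/ p)%N).
  apply/andP; split.
    rewrite divn_gt0 ?prime_gt0 //; apply: dvdn_leq => //; rewrite /n; lia.
  have : ((n %/ p) * p < p * p)%N.
    rewrite en /n. set h := p./2 in ha hb hp *. rewrite hp. nia.
  by rewrite ltn_pmul2r ?prime_gt0.
exists a%:Z, b%:Z, 1, 0; rewrite en /S4 /n; lia.
Qed.

Set Implicit Arguments.
Section QH.
Variable R : realType.
Local Notation s := (Num.sqrt (2 : R)).

Lemma ss : s * s = 2.
Proof. by rewrite -expr2 sqr_sqrtr // ler0n. Qed.

Lemma ssm (a b : R) : s * a * (s * b) = 2 * (a * b).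
Proof. by rewrite mulrACA ss. Qed.

Lemma quatE (p q : quat R) : q0 p = q0 q -> q1 p = q1 q -> q2 p = q2 q -> q3 p = q3 q -> p = q.
Proof. by case: p => ????; case: q => ???? /= -> -> -> ->. Qed.

Definition mkR (a b c d : R) : quat R :=
  Quat (a + c / 2 + d / 2) (b + c / 2 + d / 2) (s * (c / 2)) (s * (d / 2)).

Lemma inH_mk (q : quat R) : inH q <-> exists a b c d : int, q = mkR a%:~R b%:~R c%:~R d%:~R.
Proof.
split=> -[a [b [c [d ->]]]]; exists a, b, c, d; apply: quatE => /=. all: (field; try done).
Qed.

Definition nrm (q : quat R) := q0 q * q0 q + q1 q * q1 q + q2 q * q2 q + q3 q * q3 q.

Definition fN (a b c d : int) : int := a*a+b*b+(c+d)*(a+b)+c*c+c*d+d*d.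

Lemma nrm_mk (a b c d : int) : nrm (mkR a%:~R b%:~R c%:~R d%:~R) = (fN a b c d)%:~R.
Proof. rewrite /nrm /fN /= !ssm !(intrD, intrM); (field; try done). Qed.

Lemma nrm_ge0 (q : quat R) : 0 <= nrm q.
Proof. by rewrite /nrm; rewrite !addr_ge0 // -expr2 sqr_ge0. Qed.

Lemma qnormE (q : quat R) : qnorm q = qofR (nrm q).
Proof. by apply: quatE; rewrite /= /nrm; ring. Qed.

Lemma qconjmul (q : quat R) : qmul (qconj q) q = qofR (nrm q).
Proof. by apply: quatE; rewrite /= /nrm; ring. Qed.

Lemma qmulconj (q : quat R) : qmul q (qconj q) = qofR (nrm q).
Proof. by apply: quatE; rewrite /= /nrm; ring. Qed.

Lemma nrmM (p q : quat R) : nrm (qmul p q) = nrm p * nrm q.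
Proof. by rewrite /nrm /=; ring. Qed.

Lemma qmulA (p q r : quat R) : qmul p (qmul q r) = qmul (qmul p q) r.
Proof. by apply: quatE; rewrite /=; ring. Qed.

Lemma qmul1 (p : quat R) : qmul p (qone R) = p.
Proof. by apply: quatE; rewrite /=; ring. Qed.

Lemma qmul1r (p : quat R) : qmul (qone R) p = p.
Proof. by apply: quatE; rewrite /=; ring. Qed.

Lemma nrm_qofR (r : R) : nrm (qofR r) = r * r.
Proof. by rewrite /nrm /=; ring. Qed.

Lemma conj_inH (q : quat R) : inH q -> inH (qconj q).
Proof.
case/inH_mk=> [a [b [c [d ->]]]]; apply/inH_mk.
exists (a + c + d), (- b), (- c), (- d); apply: quatE => /=; rewrite !(intrD, intrN); (field; try done).
Qed.

Lemma mul_inH (p q : quat R) : inH p -> inH q -> inH (qmul p q).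
Proof.
case/inH_mk=> [a [b [c [d ->]]]]; case/inH_mk=> [a2 [b2 [c2 [d2 ->]]]]; apply/inH_mk.
exists (a*a2 - b*b2 - b*c2 - b2*d - c*c2 - c2*d - d*d2),
  (a*b2 + a2*b + b*d2 + b2*c + c*d2 - c2*d),
  (a*c2 + a2*c - b*d2 + b2*d + c*c2 + c2*d),
  (a*d2 + a2*d + b*c2 - b2*c + c2*d + d*d2).
apply: quatE => /=; rewrite ?ssm !(intrD, intrM, intrN, intrB); (field; try done).
Qed.

Lemma nrm_inH (q : quat R) : inH q -> exists n : int, nrm q = n%:~R /\ 0 <= n.
Proof.
case/inH_mk=> [a [b [c [d ->]]]]; exists (fN a b c d); rewrite nrm_mk; split => //.
by rewrite -(ler0z R) -nrm_mk nrm_ge0.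
Qed.

Lemma sq4_inH (x y u v : int) : exists q, inH q /\ nrm q = (x*x + y*y + u*u + v*v)%:~R.
Proof.
exists (mkR (x - u)%:~R (y - u)%:~R (u + v)%:~R (u - v)%:~R); split.
  by apply/inH_mk; exists (x - u), (y - u), (u + v), (u - v).
rewrite nrm_mk /fN; congr (_%:~R); ring.
Qed.

End QH.


Lemma nrm_conj (R : realType) (q : quat R) : nrm (qconj q) = nrm q.
Proof. by rewrite /nrm /=; ring. Qed.

Lemma nrm_nat (R : realType) (q : quat R) : inH q -> exists N : nat, nrm q = N%:R.
Proof.
case/nrm_inH=> n [en n0]; exists `|n|%N; rewrite en.
by rewrite -[in LHS](gez0_abs n0).
Qed.

Lemma unit_nrm (R : realType) (u : quat R) : Hunit u -> nrm u = 1.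
Proof.
case=> uH [v [vH [e1 _]]].
have [N eN] := nrm_nat uH; have [M eM] := nrm_nat vH.
have : nrm (qmul u v) = 1 by rewrite e1 /qone nrm_qofR mulr1.
rewrite nrmM eN eM -natrM => /eqP; rewrite -[1]/(1%:R) eqr_nat => /eqP e.
have N1 : N = 1%N by apply/eqP; move/eqP: e; rewrite muln_eq1 => /andP[].
by rewrite N1.
Qed.

Lemma nrm1_unit (R : realType) (u : quat R) : inH u -> nrm u = 1 -> Hunit u.
Proof.
move=> uH e; split=> //; exists (qconj u); split; first exact: conj_inH.
by rewrite qmulconj qconjmul e.
Qed.

Unset Implicit Arguments.

Theorem lemma42 (R : realType) (pi : quat R) (p : nat) :
  Hprime pi -> prime p ->
  ((Hldiv pi (qofR p%:R) \/ Hrdiv pi (qofR p%:R)) <-> qnorm pi = qofR p%:R) /\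
  (qnorm pi = qofR p%:R -> Hldiv pi (qofR p%:R) /\ Hrdiv pi (qofR p%:R)).
Proof.
move=> [piH [pi0 [nu pr]]] pp.
have back : qnorm pi = qofR p%:R -> Hldiv pi (qofR p%:R) /\ Hrdiv pi (qofR p%:R).
  move=> e; split; exists (qconj pi); split; try exact: conj_inH.
    by rewrite -e.
  by rewrite qconjmul -qnormE e.
split; last exact: back.
split; last by move/back=> [h _]; left.
have [x [xH ex]] : exists x : quat R, inH x /\ nrm x = p%:R.
  have [x1 [x2 [x3 [x4 e]]]] := four_sq p pp.
  have [x [xH ex]] := sq4_inH R x1 x2 x3 x4.
  by exists x; split => //; rewrite ex -/(S4 x1 x2 x3 x4) e.
have p1 : (p%:R : R) != 1.
  by rewrite -[1]/(1%:R) eqr_nat; apply/eqP => p1; rewrite p1 in pp.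
have nun : forall y : quat R, Hunit y -> nrm y = p%:R -> False.
  by move=> y /unit_nrm -> e; move: p1; rewrite -e eqxx.
have [N eN] := nrm_nat piH.
have key : forall a : quat R, inH a -> nrm (qmul pi a) = p%:R * p%:R \/ nrm (qmul a pi) = p%:R * p%:R ->
   (N = p)%N \/ nrm a = 1.
  move=> a aH h.
  have [Na eNa] := nrm_nat aH.
  have : (p * p = N * Na)%N.
    apply/eqP; rewrite -(eqr_nat R) !natrM -eN -eNa.
    by case: h; rewrite nrmM // mulrC => ->.
  move=> epp.
  have : (N %| p ^ 2)%N by rewrite expnS expn1 epp dvdn_mulr.
  case/dvdn_pfactor => // k; rewrite leq_eqVlt ltnS leq_eqVlt ltnS leqn0.
  case/orP=> [/eqP ->|/orP[/eqP ->|/eqP ->]] eNk.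
  - right; move: epp; rewrite eNk expnS expn1 => epp.
    have p0 := prime_gt0 pp.
    have e1 : Na = 1%N by nia.
    by rewrite eNa e1.
  - by left; rewrite eNk expn1.
  - exfalso; apply: nu; apply: nrm1_unit => //; by rewrite eN eNk.
move=> [[a [aH e]]|[a [aH e]]].
- have h : nrm (qmul pi a) = p%:R * p%:R by rewrite -e nrm_qofR.
  have [eNp|na1] := key a aH (or_introl h).
    by rewrite qnormE eN eNp.
  exfalso.
  have : pi = qmul x (qmul (qconj x) (qconj a)).
    rewrite qmulA qmulconj ex e -qmulA qmulconj na1.
    by rewrite -[qofR 1]/(qone R) qmul1.
  move/(pr _ _ xH (mul_inH (conj_inH xH) (conj_inH aH))) => [] hu.
    exact: nun hu ex.
  by apply: nun hu _; rewrite nrmM !nrm_conj ex na1 mulr1.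
- have h : nrm (qmul a pi) = p%:R * p%:R by rewrite -e nrm_qofR.
  have [eNp|na1] := key a aH (or_intror h).
    by rewrite qnormE eN eNp.
  exfalso.
  have : pi = qmul (qmul (qconj a) (qconj x)) x.
    rewrite -qmulA qconjmul ex e qmulA qconjmul na1.
    by rewrite -[qofR 1]/(qone R) qmul1r.
  move/(pr _ _ (mul_inH (conj_inH aH) (conj_inH xH)) xH) => [] hu.
    by apply: nun hu _; rewrite nrmM !nrm_conj ex na1 mul1r.
  exact: nun hu ex.
Qed.
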